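(* Let $G$ be a simple directed graph on $[n]$ and $\sigma\subseteq[n]$, and suppose either $\sigma$ is a directed clique of $G$, or $\sigma$ contains a clique of $G$ of size $|\sigma|-1$. Then $\sigma$ is a stable motif (for a CTLN $W(G,\varepsilon,\delta)$ with legal parameters) if and only if $\sigma$ is a clique.
   Context: Let $G$ be a simple directed graph on $[n]=\{1,\dots,n\}$. Legal range: $\delta>0$, $0<\varepsilon<\frac{\delta}{\delta+1}$. The CTLN $W=W(G,\varepsilon,\delta)$ is the $n\times n$ matrix with $W_{ii}=0$, $W_{ij}=-1+\varepsilon$ if $j\to i$, $W_{ij}=-1-\delta$ if $i\neq j$ and $j\not\to i$; dynamics $\dot x_i=-x_i+[\sum_jW_{ij}x_j+\theta]_+$, $\theta>0$. CTLNs are assumed nondegenerate ($\det(I-W_\sigma)\ne0$ and all Cramer determinants for $(I-W_\sigma)x=\theta1_\sigma$ nonzero). $W_\sigma$ is the principal submatrix indexed by $\sigma$. $\sigma$ is a permitted motif if $\theta(I-W_\sigma)^{-1}1_\sigma$ has all entries positive; it is a stable motif if permitted and all eigenvalues of $I-W_\sigma$ have positive real part. A clique is a set of nodes pairwise bidirectionally connected. $\sigma$ is a directed clique if its nodes can be ordered $1,\dots,|\sigma|$ so that $i\to j$ in $G|_\sigma$ whenever $i<j$ (no constraint on edges $j\to i$ for $i<j$). *)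

(* Defs.v *)
From HB Require Import structures.
From mathcomp Require Import all_boot all_order all_algebra.
From mathcomp Require Import complex.
From mathcomp Require Import reals.
Set Implicit Arguments. Unset Strict Implicit. Unset Printing Implicit Defensive.
Import Order.TTheory GRing.Theory Num.Theory.
Local Open Scope ring_scope.

(* A simple directed graph on [n] = 'I_n : edge relation G, with G j i meaning
   j -> i; simple = no self-loops. *)
Definition simple_digraph (n : nat) (G : rel 'I_n) : Prop :=
  forall i, ~~ G i i.

Definition legal_params (R : realType) (eps delta : R) : Prop :=
  0 < delta /\ 0 < eps /\ eps < delta / (delta + 1).

Definition ctln (R : realType) (n : nat) (G : rel 'I_n) (eps delta : R)
  : 'M[R]_n :=
  \matrix_(i, j) (if i == j then 0
                  else if G j i then -1 + eps else -1 - delta).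

Definition princ (R : realType) (n : nat) (W : 'M[R]_n) (s : {set 'I_n})
  : 'M[R]_#|s| :=
  \matrix_(a, b) W (enum_val a) (enum_val b).

Definition IW (R : realType) (n : nat) (W : 'M[R]_n) (s : {set 'I_n})
  : 'M[R]_#|s| := 1%:M - princ W s.

Definition cramer_mx (R : realType) (k : nat) (M : 'M[R]_k) (theta : R)
  (i : 'I_k) : 'M[R]_k :=
  \matrix_(a, b) (if b == i then theta else M a b).

Definition ctln_nondegenerate (R : realType) (n : nat) (W : 'M[R]_n) (theta : R)
  : Prop :=
  forall tau : {set 'I_n},
    \det (IW W tau) != 0 /\
    forall i : 'I_#|tau|, \det (cramer_mx (IW W tau) theta i) != 0.

Definition permitted (R : realType) (n : nat) (W : 'M[R]_n) (theta : R)
  (s : {set 'I_n}) : Prop :=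
  forall a : 'I_#|s|,
    0 < (theta *: (invmx (IW W s) *m (const_mx 1 : 'cV[R]_#|s|))) a ord0.

Definition stable_motif (R : realType) (n : nat) (W : 'M[R]_n) (theta : R)
  (s : {set 'I_n}) : Prop :=
  permitted W theta s /\
  forall z : R[i],
    eigenvalue (map_mx (fun x : R => (x%:C)%C) (IW W s)) z -> 0 < Re z.

Definition clique (n : nat) (G : rel 'I_n) (s : {set 'I_n}) : Prop :=
  forall i j, i \in s -> j \in s -> i != j -> G i j.

Definition directed_clique (n : nat) (G : rel 'I_n) (s : {set 'I_n}) : Prop :=
  exists2 l : seq 'I_n, perm_eq l (enum s) & pairwise G l.

Definition contains_near_clique (n : nat) (G : rel 'I_n) (s : {set 'I_n})
  : Prop :=
  exists2 t : {set 'I_n}, t \subset s & (#|t| = #|s| - 1)%N /\ clique G t.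

(* Main.v *)
Require Import Defs.
From HB Require Import structures.
From mathcomp Require Import all_boot all_order all_algebra.
From mathcomp Require Import complex.
From mathcomp Require Import reals.
From mathcomp Require Import ring lra.
Import Order.TTheory GRing.Theory Num.Theory.
Local Open Scope complex_scope.
Local Open Scope ring_scope.

Set Implicit Arguments. Unset Strict Implicit.

Lemma Re_realC (R : realType) (x : R) : (Re (x%:C) : R[i]) = x%:C.
Proof. by rewrite -complexRe. Qed.

Lemma ltc0R (R : realType) (x : R) : ((0 : R[i]) < x%:C) = (0 < x).
Proof. by rewrite ltcE /= eqxx. Qed.

Lemma cubic_root (R : realType) (eps delta u p be nt : R) :
  0 < eps -> 0 < delta -> 0 < u -> 1 <= p -> p <= be -> be <= nt ->
  exists mu, eps < mu /\
    (mu + nt * u) * (mu * mu - (eps + delta) * (eps + delta) * p)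
    + u * (mu - p * (eps + delta)) * (mu - (eps + delta) * be) = 0.
Proof.
move=> He Hd Hu p1 pbe bent.
set g := eps + delta.
have hg : eps < g by rewrite /g; lra.
pose qf (x : R) := (x + nt * u) * (x * x - g * g * p)
    + u * (x - p * g) * (x - g * be).
pose qp : {poly R} := ('X + (nt * u)%:P) * ('X * 'X - (g * g * p)%:P)
    + u%:P * ('X - (p * g)%:P) * ('X - (g * be)%:P).
have qpE x : qp.[x] = qf x by rewrite /qp /qf !hornerE.
have qe : qf eps < 0.
  pose X := g * g * p - eps * eps.
  have hX : 0 < X.
    have h1 : 0 <= g * g * (p - 1) by apply: mulr_ge0; [nra | lra].
    have h2 : 0 < (g - eps) * (g + eps) by apply: mulr_gt0; lra.
    rewrite /X; nra.
  have h1 : 0 <= (nt - be) * (u * X) by apply: mulr_ge0; [lra | apply: mulr_ge0; lra].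
  have h2 : 0 < eps * X by apply: mulr_gt0.
  have h3 : 0 < u * eps * (p * g - eps + be * (g - eps)).
    apply: mulr_gt0; first exact: mulr_gt0.
    have : 0 <= (p - 1) * g by apply: mulr_ge0; lra.
    have : 0 <= be * (g - eps) by apply: mulr_ge0; lra.
    lra.
  have -> : qf eps = - ((nt - be) * (u * X))
      - (eps * X + u * eps * (p * g - eps + be * (g - eps))).
    by rewrite /qf /X; ring.
  lra.
set b := eps + (p + be) * g.
have qb : 0 <= qf b.
  have hb1 : p * g <= b.
    have : 0 <= be * g by apply: mulr_ge0; lra.
    rewrite /b; lra.
  have hb2 : g * be <= b.
    have : 0 <= p * g by apply: mulr_ge0; lra.
    rewrite /b; lra.
  have hpg : 0 <= p * g by apply: mulr_ge0; lra.
  have hb3 : g * g * p <= b * b.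
    have : g * g * p <= (p * g) * (p * g).
      have : 0 <= (p - 1) * (p * (g * g)) by apply: mulr_ge0; [lra | apply: mulr_ge0; nra].
      nra.
    have : (p * g) * (p * g) <= b * b by apply: ler_pM => //.
    lra.
  have hnt : 0 <= nt * u by apply: mulr_ge0; lra.
  rewrite /qf; apply: addr_ge0; apply: mulr_ge0; try apply: mulr_ge0; lra.
have hab : eps <= b.
  have : 0 <= (p + be) * g by apply: mulr_ge0; lra.
  rewrite /b; lra.
have hq : qp.[eps] <= 0 <= qp.[b] by rewrite !qpE (ltW qe) qb.
have [mu /andP [mu1 mu2] rmu] := poly_ivt hab hq.
move: rmu; rewrite /root qpE => /eqP rmu.
exists mu; split; last by move: rmu; rewrite /qf /g.
rewrite lt_neqAle mu1 andbT; apply/eqP => emu.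
by move: qe; rewrite emu rmu ltxx.
Qed.

Section Core.
Variables (R : realType) (m : nat) (H : rel 'I_m) (eps delta : R).

Definition Mx : 'M[R]_m :=
  \matrix_(a, b) (if a == b then 1 else if H b a then 1 - eps else 1 + delta).
Definition Nb (i j : 'I_m) : bool := (i != j) && ~~ H j i.
Definition Nx (i j : 'I_m) : R := (Nb i j)%:R.

Lemma eps_lt1 (Hd : 0 < delta) (Hed : eps < delta / (delta + 1)) : eps < 1.
Proof.
have h0 : 0 < delta + 1 by lra.
have h1 : delta / (delta + 1) < 1.
  rewrite ltr_pdivrMr // mul1r; lra.
lra.
Qed.

Lemma Mx_dec i j : Mx i j = eps * (i == j)%:R + (1 - eps) + (eps + delta) * Nx i j.
Proof.
rewrite /Mx /Nx /Nb mxE; case: eqP => [->|/eqP ne] /=; rewrite ?eqxx ?ne /=.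
  by rewrite mulr1 mulr0; ring.
by case: (H j i) => /=; rewrite mulr0 ?mulr1 ?mulr0; ring.
Qed.

Lemma row_eq (y : 'cV[R]_m) i :
  (Mx *m y) i ord0 = eps * y i ord0 + (1 - eps) * (\sum_b y b ord0)
      + (eps + delta) * (\sum_b Nx i b * y b ord0).
Proof.
rewrite mxE.
under eq_bigr => b _ do rewrite Mx_dec !mulrDl.
rewrite !big_split /= -!mulr_sumr -!big_split /=.
rewrite (bigD1 i) //= eqxx mulr1.
rewrite big1; last by move=> b /negbTE; rewrite eq_sym => ->; rewrite mulr0 mul0r.
rewrite addr0.
have -> : \sum_(b < m) (eps * Nx i b * y b ord0 + delta * Nx i b * y b ord0)
  = (eps + delta) * \sum_(b < m) Nx i b * y b ord0.
  by rewrite mulr_sumr; apply: eq_bigr => b _; ring.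
ring.
Qed.



Lemma LA (y : 'cV[R]_m) (Hd : 0 < delta) (He : 0 < eps)
  (ypos : forall a, 0 < y a ord0) (Hy : Mx *m y = const_mx 1) i j :
  Nb i j -> exists l, Nb j l.
Proof.
move=> Nij; case: (pickP (Nb j)) => [l hl | hnone]; first by exists l.
exfalso.
have ej := row_eq y j; rewrite Hy mxE in ej.
have hz : \sum_b Nx j b * y b ord0 = 0.
  by apply: big1 => b _; have := hnone b; rewrite /Nx /= => ->; rewrite mul0r.
rewrite hz mulr0 addr0 in ej.
have ei := row_eq y i; rewrite Hy mxE in ei.
have hT : y j ord0 <= \sum_b Nx i b * y b ord0.
  rewrite (bigD1 j) //= /Nx Nij mul1r lerDl; apply: sumr_ge0 => b _.
  by apply: mulr_ge0; [exact: ler0n | exact: ltW].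
have hT2 : (eps + delta) * y j ord0 <= (eps + delta) * \sum_b Nx i b * y b ord0.
  by rewrite ler_wpM2l //; lra.
have h1 := mulr_gt0 He (ypos i).
have h2 := mulr_gt0 Hd (ypos j).
move: hT2; rewrite mulrDl => hT2.
lra.
Qed.

Lemma perm_y (theta : R) (Hth : 0 < theta) (Hu : Mx \in unitmx)
  (Hp : forall a : 'I_m, 0 < (theta *: (invmx Mx *m (const_mx 1 : 'cV[R]_m))) a ord0) :
  exists y : 'cV[R]_m, (forall a, 0 < y a ord0) /\ Mx *m y = const_mx 1.
Proof.
exists (invmx Mx *m const_mx 1); split; last by rewrite mulKVmx.
move=> a; have := Hp a; rewrite mxE; by rewrite pmulr_rgt0.
Qed.


Lemma clique_stable (Hd : 0 < delta) (He : 0 < eps) (Hed : eps < delta / (delta + 1))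
  (theta : R) (Hth : 0 < theta) (Hu : Mx \in unitmx)
  (Hcl : forall a b, a != b -> H a b) :
  (forall a : 'I_m, 0 < (theta *: (invmx Mx *m (const_mx 1 : 'cV[R]_m))) a ord0) /\
  (forall z : R[i], eigenvalue (map_mx (fun x : R => (x%:C)%C) Mx) z -> 0 < Re z).
Proof.
have Hu1 := eps_lt1 Hd Hed.
have N0 i j : Nx i j = 0.
  rewrite /Nx /Nb; case: eqP => [_|/eqP ne] //=.
  by rewrite Hcl // eq_sym.
have Mij i j : Mx i j = eps * (i == j)%:R + (1 - eps).
  by rewrite Mx_dec N0 mulr0 addr0.
have hm : 0 <= (m%:R : R) by exact: ler0n.
have hpos : 0 < eps + (1 - eps) * m%:R.
  have : 0 <= (1 - eps) * m%:R by apply: mulr_ge0 => //; lra.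
  lra.
split.
  set c := (eps + (1 - eps) * m%:R)^-1.
  have hc : Mx *m (c *: (const_mx 1 : 'cV[R]_m)) = const_mx 1.
    apply/matrixP => i k; rewrite (ord1 k) row_eq.
    have -> : \sum_b Nx i b * (c *: (const_mx 1 : 'cV[R]_m)) b ord0 = 0.
      by apply: big1 => b _; rewrite N0 mul0r.
    under eq_bigr => b _ do rewrite !mxE mulr1.
    rewrite sumr_const card_ord !mxE mulr1 mulr0 addr0.
    rewrite -mulr_natr /c.
    have hne : eps + (1 - eps) * m%:R != 0 by rewrite gt_eqF.
    field; done.
  move=> a; rewrite -hc mulKmx // !mxE mulr1.
  by apply: mulr_gt0 => //; rewrite invr_gt0.
move=> z /eigenvalueP [v hv vne0].
set u := 1 - eps.
set S := \sum_i v ord0 i.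
have key j : z * v ord0 j = eps%:C * v ord0 j + u%:C * S.
  have := congr1 (fun M : 'M[R[i]]_(1, m) => M ord0 j) hv; rewrite !mxE => <-.
  under eq_bigr => i _ do rewrite mxE Mij rmorphD rmorphM /= mulrDr.
  rewrite big_split /= (bigD1 j) //= eqxx mulr1.
  rewrite big1; last first.
    by move=> i /negbTE ->; rewrite mulr0; exact: mulr0.
  rewrite addr0 /S /u mulr_sumr mulrC; congr (_ + _).
  by apply: eq_bigr => i _; rewrite mulrC.
have key2 j : (z - eps%:C) * v ord0 j = u%:C * S.
  by rewrite mulrBl key; ring.
case: (eqVneq z (eps%:C)) => [->|zne]; first by rewrite Re_realC ltc0R.
have hS : S != 0.
  apply: contraNneq vne0 => S0; apply/eqP/rowP => j; rewrite mxE.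
  have := key2 j; rewrite S0 mulr0 => /eqP; rewrite mulf_eq0 subr_eq0 (negbTE zne) /=.
  by move/eqP.
have hsum : (z - eps%:C) * S = (m%:R * u)%:C * S.
  rewrite /S mulr_sumr; under eq_bigr => j _ do rewrite key2.
  by rewrite sumr_const card_ord -/S rmorphM rmorph_nat -mulr_natl; ring.
have hz : z = (eps + m%:R * u)%:C.
  move/eqP: hsum; rewrite -subr_eq0 -mulrBl mulf_eq0 (negbTE hS) orbF => /eqP h.
  apply/subr0_eq; rewrite rmorphD; rewrite -h; ring.
rewrite hz Re_realC ltc0R.
have : 0 <= m%:R * u by apply: mulr_ge0 => //; rewrite /u; lra.
lra.
Qed.


Lemma directed_core (Hd : 0 < delta) (He : 0 < eps) (y : 'cV[R]_m)
  (ypos : forall a, 0 < y a ord0) (Hy : Mx *m y = const_mx 1)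
  (pos : 'I_m -> nat) (pinj : injective pos)
  (hdir : forall a b, (pos a < pos b)%N -> H a b) :
  forall a b, a != b -> H a b.
Proof.
move=> a b ab; apply/negPn/negP => nH.
have Nba : Nb b a by rewrite /Nb eq_sym ab nH.
pose Z := [pred i | [exists j, Nb i j]].
have Zb : Z b by apply/existsP; exists a.
case: (@arg_maxnP _ b Z pos Zb) => i0 Zi0 Hmax.
move/existsP: Zi0 => [j Nij].
have [l Njl] := LA Hd He ypos Hy Nij.
have Zj : Z j by apply/existsP; exists l.
have := Hmax j Zj; rewrite /= leq_eqVlt => /orP [/eqP e|lt].
  by move: Nij; rewrite /Nb (pinj _ _ e) eqxx.
by move: Nij; rewrite /Nb (hdir _ _ lt) andbF.
Qed.


Lemma row_eqL (v : 'rV[R]_m) j :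
  (v *m Mx) ord0 j = eps * v ord0 j + (1 - eps) * (\sum_i v ord0 i)
      + (eps + delta) * (\sum_i v ord0 i * Nx i j).
Proof.
rewrite mxE.
have -> : \sum_i v ord0 i * Mx i j =
   \sum_i (eps * (v ord0 i * (i == j)%:R) + (1 - eps) * v ord0 i
            + (eps + delta) * (v ord0 i * Nx i j)).
  by apply: eq_bigr => i _; rewrite Mx_dec; ring.
rewrite !big_split /= -!mulr_sumr; congr (_ * _ + _ + _).
rewrite (bigD1 j) //= eqxx mulr1 big1 ?addr0 // => i /negbTE ->.
by rewrite mulr0.
Qed.


Lemma Nx01 i j : Nx i j = 0 \/ Nx i j = 1.
Proof. by rewrite /Nx; case: (Nb i j); [right|left]. Qed.

Lemma Nx_ge0 i j : 0 <= Nx i j.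
Proof. by case: (Nx01 i j) => ->; lra. Qed.

Lemma near_core (Hd : 0 < delta) (He : 0 < eps) (Hed : eps < delta / (delta + 1))
  (kk : 'I_m) (hnear : forall a b, a != kk -> b != kk -> a != b -> H a b)
  (y : 'cV[R]_m) (ypos : forall a, 0 < y a ord0) (Hy : Mx *m y = const_mx 1)
  (hstab : forall z : R[i],
     eigenvalue (map_mx (fun x : R => (x%:C)%C) Mx) z -> 0 < Re z) :
  forall a b, a != b -> H a b.
Proof.
have Hu1 := eps_lt1 Hd Hed.
move=> a b ab; apply/negPn/negP => nH.
have Nba : Nb b a by rewrite /Nb eq_sym ab nH.
have Nout i j : i != kk -> j != kk -> Nb i j = false.
  move=> ik jk; rewrite /Nb; case: eqP => [//|/eqP ij] /=.
  by rewrite hnear // eq_sym.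
pose pi j := Nx kk j.
pose bi i := Nx i kk.
pose e i : R := (i != kk)%:R.
have Nstruct i j : Nx i j = (i == kk)%:R * pi j + (j == kk)%:R * bi i.
  rewrite /pi /bi; case: (eqVneq i kk) => [->|ik]; case: (eqVneq j kk) => [->|jk] /=;
    rewrite ?mul1r ?mul0r ?add0r ?addr0 //.
  - by rewrite /Nx /Nb eqxx /= addr0.
  - by rewrite /Nx Nout.
have pikk : pi kk = 0 by rewrite /pi /Nx /Nb eqxx.
have bikk : bi kk = 0 by rewrite /bi /Nx /Nb eqxx.
have PB j : Nb kk j -> Nb j kk.
  move=> hj; have [l hl] := LA Hd He ypos Hy hj.
  have jk : j != kk by move: hj; rewrite /Nb eq_sym => /andP [].
  case: (eqVneq l kk) => [<- //|lk].
  by rewrite Nout in hl.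
have pibi i : pi i * bi i = pi i.
  rewrite /pi /bi /Nx; case hk: (Nb kk i) => /=; last by rewrite mul0r.
  by rewrite PB // mulr1.
have ebi i : e i * bi i = bi i.
  rewrite /e; case: (eqVneq i kk) => [->|ik] /=; first by rewrite bikk mulr0.
  by rewrite mul1r.
have [j0 hj0] : exists j, Nb kk j.
  case: (eqVneq b kk) => [<-|bk]; first by exists a.
  case: (eqVneq a kk) => [ak|ak]; last by rewrite Nout in Nba.
  by rewrite ak in Nba; have := LA Hd He ypos Hy Nba.
pose p := \sum_i pi i.
pose be := \sum_i bi i.
pose nt := \sum_i e i.
have pi_ge0 i : 0 <= pi i by exact: Nx_ge0.
have p1 : 1 <= p.
  rewrite /p (bigD1 j0) //= {1}/pi /Nx hj0 lerDl; exact: sumr_ge0.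
have pbe : p <= be.
  apply: ler_sum => i _; rewrite -pibi.
  rewrite /bi /pi; case: (Nx01 i kk) => ->; case: (Nx01 kk i) => ->; lra.
have bent : be <= nt.
  apply: ler_sum => i _; rewrite -ebi /e /bi.
  case: (i != kk) => /=; case: (Nx01 i kk) => ->; lra.
have Hu : 0 < 1 - eps by lra.
have [mu [hmu hq]] := cubic_root He Hd Hu p1 pbe bent.
pose w := mu * (mu + nt * (1 - eps)).
pose S0 := mu - p * (eps + delta).
pose Tv := - ((1 - eps) * S0).
pose d := - ((eps + delta) * (mu + nt * (1 - eps))).
pose v : 'rV[R]_m := \row_i ((i == kk)%:R * w + e i * Tv + pi i * d).
have vkk : v ord0 kk = w by rewrite mxE eqxx /e eqxx pikk /=; ring.
have Sv : \sum_i v ord0 i = w + nt * Tv + p * d.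
  under eq_bigr => i _ do rewrite mxE.
  rewrite !big_split /= -!mulr_suml.
  rewrite (bigD1 kk) //= eqxx big1 ?addr0 ?mul1r //.
  by move=> i /negbTE ->.
have Sb : \sum_i v ord0 i * bi i = Tv * be + d * p.
  have term i : v ord0 i * bi i = bi i * Tv + pi i * d.
    rewrite mxE.
    transitivity ((i == kk)%:R * bi i * w + e i * bi i * Tv + pi i * bi i * d); first by ring.
    rewrite ebi pibi; case: (eqVneq i kk) => [->|ik]; first by rewrite bikk; ring.
    by rewrite mul0r mul0r add0r.
  under eq_bigr => i _ do rewrite term.
  by rewrite big_split /= -!mulr_suml mulrC [d * _]mulrC.
have key j : (v *m Mx) ord0 j = (eps - mu) * v ord0 j.
  rewrite row_eqL Sv.
  have -> : \sum_i v ord0 i * Nx i j = w * pi j + (j == kk)%:R * (Tv * be + d * p).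
    under eq_bigr => i _ do rewrite Nstruct mulrDr.
    rewrite big_split /=; congr (_ + _).
      rewrite (bigD1 kk) //= eqxx mul1r vkk big1 ?addr0 //.
      by move=> i /negbTE ->; rewrite mul0r mulr0.
    rewrite -Sb mulr_sumr; apply: eq_bigr => i _; ring.
  rewrite mxE; case: (eqVneq j kk) => [->|jk].
    rewrite pikk /e eqxx /=.
    apply: subr0_eq; etransitivity; last exact: hq.
    rewrite /w /Tv /d /S0; ring.
  rewrite /e jk /=.
  rewrite /w /Tv /d /S0; ring.
have hv : v *m Mx = (eps - mu) *: v.
  by apply/matrixP => i j; rewrite (ord1 i) key [in RHS]mxE.
have wpos : 0 < w.
  apply: mulr_gt0; first lra.
  have : 0 <= nt * (1 - eps) by apply: mulr_ge0; lra.
  lra.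
have := hstab ((eps - mu)%:C).
rewrite Re_realC ltc0R => h.
have : 0 < eps - mu; last by lra.
apply: h; apply/eigenvalueP; exists (map_mx (real_complex R) v).
  by rewrite -map_mxM hv map_mxZ.
rewrite map_mx_eq0; apply/eqP => v0.
by move: vkk; rewrite v0 mxE => w0; move: wpos; rewrite -w0 ltxx.
Qed.

End Core.

Lemma IW_Mx (R : realType) (n : nat) (G : rel 'I_n) (s : {set 'I_n}) (eps delta : R) :
  IW (ctln G eps delta) s =
  Mx (fun a b : 'I_#|s| => G (enum_val a) (enum_val b)) eps delta.
Proof.
apply/matrixP => a b; rewrite !mxE (inj_eq enum_val_inj).
case: (a == b) => /=; rewrite ?mulr0n ?mulr1n; first by rewrite subr0.
by case: (G _ _); ring.
Qed.

Lemma clique_core (n : nat) (G : rel 'I_n) (s : {set 'I_n}) :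
  clique G s <-> (forall a b : 'I_#|s|, a != b -> G (enum_val a) (enum_val b)).
Proof.
split.
  move=> hc a b ab; apply: hc; rewrite ?enum_valP //.
  by rewrite (inj_eq enum_val_inj).
move=> hc i j hi hj ij.
rewrite -(enum_rankK_in hi hi) -(enum_rankK_in hi hj); apply: hc.
apply/eqP => e; move: ij; rewrite -(enum_rankK_in hi hi) -(enum_rankK_in hi hj) e.
by rewrite eqxx.
Qed.

Unset Implicit Arguments. Set Strict Implicit.

Theorem theorem4 (R : realType) (n : nat) (G : rel 'I_n) (s : {set 'I_n})
  (eps delta theta : R) :
  simple_digraph G ->
  legal_params eps delta ->
  0 < theta ->
  ctln_nondegenerate (ctln G eps delta) theta ->
  directed_clique G s \/ contains_near_clique G s ->
  (stable_motif (ctln G eps delta) theta s <-> clique G s).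
Proof.
move=> _ [Hd [He Hed]] Hth nd hyp.
have Hu : IW (ctln G eps delta) s \in unitmx.
  by rewrite unitmxE unitfE; case: (nd s).
rewrite /stable_motif /permitted IW_Mx clique_core.
rewrite IW_Mx in Hu.
split; last first.
  by move=> hc; apply: clique_stable.
move=> [hp hst].
have [y [ypos Hy]] := perm_y Hth Hu hp.
case: hyp => [[l pl pw] | [t ts [ct clt]]].
  pose pos (a : 'I_#|s|) := index (enum_val a) l.
  have inl (a : 'I_#|s|) : enum_val a \in l by rewrite (perm_mem pl) mem_enum enum_valP.
  apply: (directed_core Hd He ypos Hy (pos := pos)).
    move=> a b e; apply: enum_val_inj.
    by rewrite -(nth_index (enum_val a) (inl a)) -(nth_index (enum_val a) (inl b)) -/(pos a) -/(pos b) e.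
  move=> a b lt.
  have /pairwiseP := pw => /(_ (enum_val a)) P.
  rewrite -(nth_index (enum_val a) (inl a)) -(nth_index (enum_val a) (inl b)).
  by apply: P; rewrite ?unfold_in /= ?index_mem ?inl.
case: (posnP #|s|) => [s0|spos].
  move=> a b; case: a => a ha; exfalso; move: ha; by rewrite s0.
have pr : t \proper s by rewrite properEcard ts ct ltn_subrL spos.
have [_ [k ks kt]] := properP pr.
have tE : t = s :\ k.
  apply/eqP; rewrite eqEcard subsetD1 ts kt /=.
  by rewrite ct (cardsD1 k s) ks /= add1n subn1 /=.
pose kk := enum_rank_in ks k.
apply: (near_core Hd He Hed (kk := kk) _ ypos Hy hst).
move=> a b ak bk ab.
have hin (c : 'I_#|s|) : c != kk -> enum_val c \in t.
  move=> ck; rewrite tE in_setD1 enum_valP andbT.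
  apply: contra ck => /eqP e; apply/eqP; apply: enum_val_inj.
  by rewrite e /kk enum_rankK_in.
apply: clt; rewrite ?hin //.
by rewrite (inj_eq enum_val_inj).
Qed.
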